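(* Let $\Omega$ be a transitive state space whose positive cone $V_+$ is self-dual with respect to $\langle\cdot,\cdot\rangle_{GL(\Omega)}$. Then for every nonzero effect $e\in\mathcal E_\Omega$, $$\frac{e}{\langle u,e\rangle_{GL(\Omega)}}\in\Omega,$$ and for every ideal observable $F=\{f_a\}_{a\in A}$ on $\Omega$, $$\left\langle f_a,\frac{f_a}{\langle u,f_a\rangle_{GL(\Omega)}}\right\rangle_{GL(\Omega)}=1\quad\text{for all }a\in A.$$
   Context: $V=\mathbb R^{N+1}$ with Euclidean inner product $(\cdot,\cdot)_E$. A state space $\Omega\subset V$ is a compact convex set with $\mathrm{span}(\Omega)=V$ and $0\notin\mathrm{aff}(\Omega)$; $V_+=\{\lambda\omega:\lambda\ge0,\omega\in\Omega\}$; the unit effect $u\in V^*$ satisfies $u(\omega)=1$ on $\Omega$; effects $\mathcal E_\Omega=\{e\in V^*:0\le e(\omega)\le1\ \forall\omega\in\Omega\}$; an observable with finite outcome set $A$ is a family of effects $\{f_a\}_{a\in A}$ with $\sum_af_a=u$ (trivial observable $\{u\}$ excluded). An effect is pure if it is an extreme point of $\mathcal E_\Omega$; indecomposable if $e\ne0$ and $e=e_1+e_2$ with $e_1,e_2\in\mathcal E_\Omega$ forces $e_1,e_2$ to be scalar multiples of $e$. $F=\{f_a\}$ is ideal if each $f_a$ equals $\sum_{i\in I_a}e_i$ or $u-\sum_{i\in I_a}e_i$ for a finite family of pure indecomposable effects. $GL(\Omega)$: group of linear bijections $T$ of $V$ with $T(\Omega)=\Omega$, $\mu$ its normalized Haar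 measure, $\langle x,y\rangle_{GL(\Omega)}=\int(Tx,Ty)_E\,d\mu(T)$. $\Omega$ is transitive if $GL(\Omega)$ acts transitively on the extreme points; then there is a unique $GL(\Omega)$-invariant state $\omega_M$, and by convention $(\omega_M,\omega_M)_E=1$. $V_+$ is self-dual w.r.t. $\langle\cdot,\cdot\rangle_{GL(\Omega)}$ if $V_+=\{y:\langle x,y\rangle_{GL(\Omega)}\ge0\ \forall x\in V_+\}$. Every linear functional (in particular every effect and $u$) is identified with the vector in $V$ representing it through $\langle\cdot,\cdot\rangle_{GL(\Omega)}$, and inner products of effects are computed between these vectors. *)

(* Defs.v *)
From HB Require Import structures.
From mathcomp Require Import all_boot all_order all_algebra.
From mathcomp Require Import all_classical all_reals all_analysis.

Set Implicit Arguments.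
Unset Strict Implicit.
Unset Printing Implicit Defensive.

Import Order.TTheory GRing.Theory Num.Theory.
Import numFieldNormedType.Exports.
Local Open Scope classical_set_scope.
Local Open Scope ring_scope.

Section GPT.
Variables (R : realType) (n : nat).
Local Notation V := 'rV[R]_n.

Definition dotE (x y : V) : R := \sum_(i < n) x ord0 i * y ord0 i.

Definition MatB : measurableType (@open 'M[R]_n).-sigma :=
  g_sigma_algebraType (@open 'M[R]_n).

(* A matrix T acts on V by x |-> x *m T. *)
Definition GLset (Om : set V) : set 'M[R]_n :=
  [set T | T \in unitmx /\ [set x *m T | x in Om] = Om].

Definition is_haar (Om : set V) (mu : probability MatB R) : Prop :=
  mu (GLset Om) = 1%E /\
  forall S, GLset Om S -> forall A : set MatB, measurable A ->
    mu [set T : MatB | A (S *m T)] = mu A.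

Definition ipG (mu : probability MatB R) (x y : V) : R :=
  Rintegral mu setT (fun T : MatB => dotE (x *m (T : 'M[R]_n)) (y *m (T : 'M[R]_n))).

Definition convex_set (S : set V) : Prop :=
  forall x y, S x -> S y -> forall t : R, 0 <= t <= 1 ->
    S (t *: x + (1 - t) *: y).

Definition spans (S : set V) : Prop :=
  forall v : V, exists k (c : 'I_k -> R) (w : 'I_k -> V),
    (forall i, S (w i)) /\ v = \sum_(i < k) c i *: w i.

Definition zero_notin_aff (S : set V) : Prop :=
  ~ exists k (c : 'I_k -> R) (w : 'I_k -> V),
    [/\ forall i, S (w i), \sum_(i < k) c i = 1 & \sum_(i < k) c i *: w i = 0].

Definition state_space (Om : set V) : Prop :=
  [/\ compact Om, convex_set Om, spans Om & zero_notin_aff Om].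

Definition extreme_point (S : set V) (x : V) : Prop :=
  S x /\ forall y z (t : R), S y -> S z -> 0 < t < 1 ->
    x = t *: y + (1 - t) *: z -> y = x /\ z = x.

Definition transitive_ss (Om : set V) : Prop :=
  forall x y, extreme_point Om x -> extreme_point Om y ->
    exists T, GLset Om T /\ y = x *m T.

Definition invariant_state_normalized (Om : set V) : Prop :=
  forall wM, Om wM -> (forall T, GLset Om T -> wM *m T = wM) -> dotE wM wM = 1.

Definition Vplus (Om : set V) : set V :=
  [set y | exists l : R, 0 <= l /\ exists w, Om w /\ y = l *: w].

Definition self_dual (mu : probability MatB R) (Om : set V) : Prop :=
  Vplus Om = [set y | forall x, Vplus Om x -> 0 <= ipG mu x y].

(* Linear functionals are identified with their representing vectors
   w.r.t. <.,.>_{GL(Om)}: the functional of e is  x |-> ipG mu e x. *)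
Definition unit_effect (mu : probability MatB R) (Om : set V) (u : V) : Prop :=
  forall w, Om w -> ipG mu u w = 1.

Definition effects (mu : probability MatB R) (Om : set V) : set V :=
  [set e | forall w, Om w -> 0 <= ipG mu e w <= 1].

Definition pure_effect mu Om (e : V) : Prop := extreme_point (effects mu Om) e.

Definition indecomposable mu Om (e : V) : Prop :=
  e != 0 /\ forall e1 e2, effects mu Om e1 -> effects mu Om e2 -> e = e1 + e2 ->
    (exists c : R, e1 = c *: e) /\ (exists c : R, e2 = c *: e).

(* observable with finite outcome set A (the trivial observable {u} excluded) *)
Definition observable mu Om (u : V) (A : finType) (f : A -> V) : Prop :=
  [/\ forall a, effects mu Om (f a), \sum_(a : A) f a = u & (1 < #|A|)%N].

Definition ideal_observable mu Om (u : V) (A : finType) (f : A -> V) : Prop :=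
  observable mu Om u f /\
  forall a, exists k (es : 'I_k -> V),
    (forall i, pure_effect mu Om (es i) /\ indecomposable mu Om (es i)) /\
    (f a = \sum_(i < k) es i \/ f a = u - \sum_(i < k) es i).

End GPT.

(* Main.v *)
Require Import Defs.
From HB Require Import structures.
From mathcomp Require Import all_boot all_order all_algebra.
From mathcomp Require Import all_classical all_reals all_analysis.
From mathcomp Require Import ring lra.
Import Order.TTheory GRing.Theory Num.Def Num.Theory.
Import numFieldNormedType.Exports.
Local Open Scope classical_set_scope.
Local Open Scope ring_scope.

Section Norms.
Context {R : realType}.

Lemma entry_le_norm {m n} (v : 'M[R]_(m, n)) i j : `|v i j| <= `|v|.
Proof.
rewrite [X in _ <= X]/normr /= mx_normrE.
apply/bigmax_geP; right => /=; by exists (i, j).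
Qed.

Lemma norm_le_entries {m n} (v : 'M[R]_(m, n)) c : 0 <= c ->
  (forall i j, `|v i j| <= c) -> `|v| <= c.
Proof.
move=> c0 H; rewrite [X in X <= _]/normr /= mx_normrE.
apply/bigmax_leP; split => // -[i j] _ /=; exact: H.
Qed.

Lemma mulmx_norm {m n p} (x : 'M[R]_(m, n)) (M : 'M[R]_(n, p)) :
  `|x *m M| <= n%:R * (`|x| * `|M|).
Proof.
apply: norm_le_entries; first by rewrite mulr_ge0 ?mulr_ge0.
move=> i j; rewrite mxE.
apply: le_trans (ler_norm_sum _ _ _) _.
apply: le_trans (_ : \sum_(k < n) `|x| * `|M| <= _).
  apply: ler_sum => k _; rewrite normrM.
  by apply: ler_pM => //; apply: entry_le_norm.
by rewrite sumr_const card_ord mulr_natl.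
Qed.

Lemma lip_cont (V W : normedModType R) (f : V -> W) (C : R) : 0 <= C ->
  (forall a b, `|f a - f b| <= C * `|a - b|) -> continuous f.
Proof.
move=> C0 H x; apply/cvgrPdist_lt => e e0.
have C1 : 0 < C + 1 by rewrite ltr_pwDr.
near=> z.
apply: (le_lt_trans (H x z)).
apply: (le_lt_trans (_ : _ <= (C + 1) * `|x - z|)).
  by apply: ler_pM => //; rewrite lerDl.
rewrite -ltr_pdivlMl //.
near: z; apply: cvgr_dist_lt => //; by rewrite mulrC divr_gt0.
Unshelve. all: by end_near. Qed.

End Norms.

Section GL.
Context {R : realType} {n : nat} (Om : set 'rV[R]_n).
Hypothesis cOm : compact Om.
Hypothesis sOm : spans Om.

Lemma Om_closed : closed Om.
Proof. exact: compact_closed (@norm_hausdorff _ _) cOm. Qed.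

Lemma Om_bounded : exists Bo : R, 0 <= Bo /\ forall x, Om x -> `|x| <= Bo.
Proof.
have [M [Mreal HM]] := compact_bounded cOm.
exists (`|M| + 1); split; first by rewrite addr_ge0.
move=> x Ox; apply: (HM (`|M| + 1)) => //.
by rewrite (le_lt_trans (real_ler_norm Mreal)) // ltrDl.
Qed.

Lemma mulmx_cont (x : 'rV[R]_n) : continuous (fun T : 'M[R]_n => x *m T).
Proof.
apply: (@lip_cont _ _ _ _ (n%:R * `|x|)); first by rewrite mulr_ge0.
move=> a b; rewrite -mulmxBr -mulrA; exact: mulmx_norm.
Qed.

Lemma GLset_closed : closed (GLset Om).
Proof.
move=> p clp.
have sub1 : forall x, Om x -> Om (x *m p).
  move=> x Ox; apply: Om_closed => B /= nB.
  have := mulmx_cont x p B nB => /= /clp [T [[_ GT] BT]].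
  exists (x *m T); split => //; rewrite -GT; by exists x.
have sub2 : forall y, Om y -> exists2 x, Om x & x *m p = y.
  move=> y Oy; apply: contrapT => hne.
  have hne' : forall x, Om x -> x *m p != y.
    by move=> x Ox; apply/eqP => E; apply: hne; exists x.
  pose h x := `|x *m p - y|.
  have ch : {within Om, continuous h}.
    apply: continuous_subspaceT.
    apply: (@lip_cont _ _ _ _ (n%:R * `|p|)); first by rewrite mulr_ge0.
    move=> a b; rewrite /h.
    apply: le_trans (ler_dist_dist _ _) _.
    rewrite opprB addrA subrK -mulmxBl -mulrA [`|p| * _]mulrC.
    exact: mulmx_norm.
  have [x0 /set_mem Ox0 hmin] := compact_EVT_min (ex_intro _ y Oy) cOm ch.
  have dpos : 0 < h x0 by rewrite normr_gt0 subr_eq0 hne'.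
  have [Bo [Bo0 HBo]] := Om_bounded.
  have Kpos : 0 < n%:R * Bo + 1 by rewrite ltr_pwDr // mulr_ge0.
  have := clp (ball p (h x0 / (n%:R * Bo + 1))).
  case; first by apply: nbhsx_ballx; rewrite divr_gt0.
  move=> T [[_ GT]]; rewrite -ball_normE /= => pT.
  have : Om y by [].
  rewrite -GT => -[x' Ox' xT].
  have H1 : h x0 <= `|x' *m (p - T)|.
    by rewrite mulmxBr xT; apply: hmin; apply: mem_set.
  have H2 : `|x' *m (p - T)| <= n%:R * (Bo * `|p - T|).
    apply: le_trans (mulmx_norm _ _) _.
    by rewrite ler_wpM2l // ler_wpM2r // HBo.
  rewrite ltr_pdivlMr // in pT.
  have H3 : 0 <= n%:R * Bo by rewrite mulr_ge0.
  have H4 : 0 <= `|p - T| by [].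
  nra.
split; last first.
  apply/seteqP; split.
    by move=> _ [x Ox <-]; exact: sub1.
  by move=> y Oy; have [x Ox E] := sub2 y Oy; exists x.
rewrite -row_full_unit -sub1mx; apply/row_subP => i.
have [k [c [w [Ow E]]]] := sOm (row i 1%:M).
have ex : forall j, exists x, Om x /\ x *m p = w j.
  by move=> j; have [x Ox E'] := sub2 _ (Ow j); exists x.
have [xs Hxs] := choice ex.
apply/submxP; exists (\sum_(j < k) c j *: xs j).
rewrite E mulmx_suml; apply: eq_bigr => j _.
by rewrite -scalemxAl (proj2 (Hxs j)).
Qed.

End GL.

Section DotE.
Context {R : realType} {n : nat}.
Implicit Types a b c : 'rV[R]_n.

Lemma dotE_sym a b : dotE a b = dotE b a.
Proof. by apply: eq_bigr => i _; rewrite mulrC. Qed.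

Lemma dotE_addl a b c : dotE (a + b) c = dotE a c + dotE b c.
Proof. by rewrite /dotE -big_split; apply: eq_bigr => i _; rewrite mxE mulrDl. Qed.

Lemma dotE_scalel k a b : dotE (k *: a) b = k * dotE a b.
Proof. by rewrite /dotE mulr_sumr; apply: eq_bigr => i _; rewrite mxE mulrA. Qed.

Lemma dotE_ge0 a : 0 <= dotE a a.
Proof. by apply: sumr_ge0 => i _; rewrite -expr2 sqr_ge0. Qed.

Lemma dotE_bound a b : `|dotE a b| <= n%:R * (`|a| * `|b|).
Proof.
apply: le_trans (ler_norm_sum _ _ _) _.
apply: le_trans (_ : \sum_(i < n) `|a| * `|b| <= _).
  apply: ler_sum => i _; rewrite normrM.
  by apply: ler_pM => //; apply: entry_le_norm.
by rewrite sumr_const card_ord mulr_natl.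
Qed.

End DotE.

Section Cont.
Context {R : realType}.

Lemma cont_sum (T : topologicalType) k (F : 'I_k -> T -> R) :
  (forall i, continuous (F i)) -> continuous (fun t => \sum_(i < k) F i t).
Proof.
elim: k F => [|k IH] F cF.
  have -> : (fun t => \sum_(i < 0) F i t) = fun=> 0.
    by apply: funext => t; rewrite big_ord0.
  exact: cst_continuous.
have -> : (fun t => \sum_(i < k.+1) F i t) =
   (fun t => \sum_(i < k) F (widen_ord (leqnSn k) i) t) + F ord_max.
  by apply: funext => t; rewrite big_ord_recr.
move=> t; apply: continuousD; last exact: cF.
by apply: IH => i; exact: cF.
Qed.

End Cont.

Section Meas.
Context {R : realType} {n : nat}.

Lemma closed_measurable_MatB (A : set 'M[R]_n) : closed A ->
  measurable (A : set (MatB R n)).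
Proof.
move=> cA; rewrite -(setCK A); apply: measurableC.
apply: sub_sigma_algebra; exact: closed_openC.
Qed.

Lemma cont_measurable_MatB (f : 'M[R]_n -> R) : continuous f ->
  measurable_fun setT (f : MatB R n -> R).
Proof.
move=> /continuousP cf; apply: (measurability _ (measurable_realfun.RGenOpens.measurableE R)).
move=> _ [_ [a [b ->] <-]]; apply: measurableI => //.
apply: sub_sigma_algebra; apply: cf; exact: interval_open.
Qed.

Lemma cont_measurable_MatB2 (f : 'M[R]_n -> 'M[R]_n) : continuous f ->
  measurable_fun setT (f : MatB R n -> MatB R n).
Proof.
move=> /continuousP cf; apply: (measurability _ (erefl (@measurable _ (MatB R n)))).
move=> _ [A oA <-]; apply: measurableI => //.
apply: sub_sigma_algebra; exact: cf.
Qed.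

End Meas.

Section Integ.
Context {R : realType} {n : nat} (Om : set 'rV[R]_n) (mu : probability (MatB R n) R).
Hypothesis cOm : compact Om.
Hypothesis sOm : spans Om.
Hypothesis haar : is_haar Om mu.

Definition gI (x y : 'rV[R]_n) (T : MatB R n) : R := dotE (x *m T) (y *m T).

Lemma gI_cont (x y : 'rV[R]_n) : continuous (fun T : 'M[R]_n => dotE (x *m T) (y *m T)).
Proof.
apply: cont_sum => i T; apply: continuousM.
  exact: (continuous_comp (mulmx_cont x T) (@coord_continuous _ _ _ _ _ _)).
exact: (continuous_comp (mulmx_cont y T) (@coord_continuous _ _ _ _ _ _)).
Qed.

Lemma gI_meas (x y : 'rV[R]_n) : measurable_fun setT (gI x y).
Proof. exact: cont_measurable_MatB (gI_cont x y). Qed.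

Lemma GL_meas : measurable (GLset Om : set (MatB R n)).
Proof. exact: closed_measurable_MatB (GLset_closed Om cOm sOm). Qed.

Lemma GLC_null : mu (~` GLset Om) = 0%E.
Proof. rewrite probability_setC; last exact: GL_meas. by case: haar => -> _; rewrite subee. Qed.

Lemma row_bound (x : 'rV[R]_n) : exists K : R, 0 <= K /\
  forall T, GLset Om T -> `|x *m T| <= K.
Proof.
have [k [c [w [Ow E]]]] := sOm x.
have [Bo [Bo0 HBo]] := Om_bounded Om cOm.
exists (\sum_(j < k) `|c j| * Bo); split.
  by apply: sumr_ge0 => j _; rewrite mulr_ge0.
move=> T [_ GT]; rewrite E mulmx_suml.
apply: le_trans (ler_norm_sum _ _ _) _; apply: ler_sum => j _.
rewrite -scalemxAl normrZ ler_wpM2l // HBo // -GT; by exists (w j).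
Qed.

Lemma gI_int (x y : 'rV[R]_n) : mu.-integrable setT (EFin \o gI x y).
Proof.
have [Kx [Kx0 HKx]] := row_bound x.
have [Ky [Ky0 HKy]] := row_bound y.
apply/integrableP; split.
  by apply/measurable_realfun.measurable_EFinP; exact: gI_meas.
apply: (@le_lt_trans _ _ ((n%:R * (Kx * Ky))%:E * mu setT)%E).
  apply: integral_le_bound => //.
  - by apply/measurable_realfun.measurable_EFinP; exact: gI_meas.
  - by rewrite lee_fin !mulr_ge0.
  exists (~` GLset Om); split => //; first by apply: measurableC; exact: GL_meas.
    exact: GLC_null.
  move=> T /= HT GT; apply: HT => _.
  rewrite lee_fin; apply: le_trans (dotE_bound _ _) _.
  by rewrite ler_wpM2l // ler_pM // ?HKx ?HKy.
by rewrite probability_setT mule1 ltry.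
Qed.

Lemma ipG_sym (x y : 'rV[R]_n) : ipG mu x y = ipG mu y x.
Proof. by rewrite /ipG; apply: eq_Rintegral => T _; exact: dotE_sym. Qed.

Lemma ipG_addl (x y z : 'rV[R]_n) : ipG mu (x + y) z = ipG mu x z + ipG mu y z.
Proof.
rewrite /ipG -RintegralD //; try exact: gI_int.
by apply: eq_Rintegral => T _; rewrite mulmxDl dotE_addl.
Qed.

Lemma ipG_scalel k (x y : 'rV[R]_n) : ipG mu (k *: x) y = k * ipG mu x y.
Proof.
rewrite /ipG -RintegralZl //; last exact: gI_int.
by apply: eq_Rintegral => T _; rewrite -scalemxAl dotE_scalel.
Qed.

Lemma ipG_ge0 (x : 'rV[R]_n) : 0 <= ipG mu x x.
Proof. by apply: Rintegral_ge0 => T _; exact: dotE_ge0. Qed.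

Lemma lmul_cont (S : 'M[R]_n) : continuous (fun T : 'M[R]_n => S *m T).
Proof.
apply: (@lip_cont _ _ _ _ (n%:R * `|S|)); first by rewrite mulr_ge0.
move=> a b; rewrite -mulmxBr -mulrA; exact: mulmx_norm.
Qed.

Lemma ipG_inv (S : 'M[R]_n) (x y : 'rV[R]_n) : GLset Om S ->
  ipG mu (x *m S) (y *m S) = ipG mu x y.
Proof.
move=> GS; rewrite /ipG /Rintegral; congr fine.
have mphi := @cont_measurable_MatB2 R n _ (lmul_cont S).
have mf := iffRL (measurable_realfun.measurable_EFinP _ _) (gI_meas x y).
have intf : mu.-integrable ((fun T : MatB R n => (S *m T : MatB R n)) @^-1` setT)
     ((EFin \o gI x y) \o (fun T : MatB R n => (S *m T : MatB R n))).
  rewrite preimage_setT.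
  have -> : (EFin \o gI x y) \o (fun T : MatB R n => (S *m T : MatB R n)) =
     EFin \o gI (x *m S) (y *m S).
    by apply: funext => T; rewrite /= /gI !mulmxA.
  exact: gI_int.
have := integral_pushforward mphi mf intf (@measurableT _ (MatB R n)).
rewrite preimage_setT => E.
transitivity (\int[mu]_(T in setT) ((EFin \o gI x y) \o
   (fun T : MatB R n => (S *m T : MatB R n))) T)%E.
  by apply: eq_integral => T _; rewrite /= /gI !mulmxA.
rewrite -E; apply: eq_measure_integral => A mA _.
by rewrite /pushforward; apply: haar.2.
Qed.

End Integ.

Section Alg.
Context {R : realType} {n : nat} (Om : set 'rV[R]_n) (mu : probability (MatB R n) R).
Hypothesis cOm : compact Om.
Hypothesis sOm : spans Om.
Hypothesis haar : is_haar Om mu.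
Local Notation B := (ipG mu).
Implicit Types x y z w : 'rV[R]_n.

Let addl := ipG_addl Om mu cOm sOm haar.
Let scalel := ipG_scalel Om mu cOm sOm haar.
Let sym := ipG_sym mu.

Lemma B_addr x y z : B x (y + z) = B x y + B x z.
Proof. by rewrite sym addl !(sym x). Qed.

Lemma B_scaler k x y : B x (k *: y) = k * B x y.
Proof. by rewrite sym scalel sym. Qed.

Lemma B_0l x : B 0 x = 0.
Proof. by rewrite -(scale0r 0) scalel mul0r. Qed.

Lemma B_0r x : B x 0 = 0.
Proof. by rewrite sym B_0l. Qed.

Lemma B_oppl x y : B (- x) y = - B x y.
Proof. by rewrite -scaleN1r scalel mulN1r. Qed.

Lemma B_oppr x y : B x (- y) = - B x y.
Proof. by rewrite sym B_oppl sym. Qed.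

Lemma B_subl x y z : B (x - y) z = B x z - B y z.
Proof. by rewrite addl B_oppl. Qed.

Lemma B_subr x y z : B x (y - z) = B x y - B x z.
Proof. by rewrite B_addr B_oppr. Qed.

Lemma B_suml k (F : 'I_k -> 'rV[R]_n) y : B (\sum_(i < k) F i) y = \sum_(i < k) B (F i) y.
Proof.
elim/big_ind2 : _ => //; first exact: B_0l.
by move=> a b c d <- <-; rewrite addl.
Qed.

Lemma B_sumr k (F : 'I_k -> 'rV[R]_n) y : B y (\sum_(i < k) F i) = \sum_(i < k) B y (F i).
Proof. by rewrite sym B_suml; apply: eq_bigr => i _; rewrite sym. Qed.

Lemma B_comb2 a b y z : B (a *: y + b *: z) (a *: y + b *: z) =
  a ^+ 2 * B y y + 2 * a * b * B y z + b ^+ 2 * B z z.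
Proof.
rewrite addl !B_addr !scalel !B_scaler (sym z y).
ring.
Qed.

Lemma B_semi_orth d : B d d = 0 -> forall v, B d v = 0.
Proof.
move=> d0 v.
set b := B d v; set c := B v v.
have c0 : 0 <= c by exact: ipG_ge0.
pose t := - b / (c + 1).
have := ipG_ge0 mu (1 *: d + t *: v).
rewrite B_comb2 d0 -/b -/c.
have -> : 1 ^+ 2 * 0 + 2 * 1 * t * b + t ^+ 2 * c = - (b ^+ 2 * (c + 2)) / (c + 1) ^+ 2.
  rewrite /t; field.
  by rewrite gt_eqF //; lra.
move=> H.
have Yp : 0 < ((c + 1) ^+ 2)^-1 by rewrite invr_gt0 exprn_gt0 //; lra.
have H2 : 0 <= - (b ^+ 2 * (c + 2)) by nra.
have H3 : b ^+ 2 <= 0 by nra.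
by apply/eqP; rewrite -sqrf_eq0 eq_le sqr_ge0 andbT.
Qed.

End Alg.

Section Main.
Context {R : realType} {n : nat} (Om : set 'rV[R]_n) (mu : probability (MatB R n) R)
  (u : 'rV[R]_n).
Hypothesis hss : state_space Om.
Hypothesis haar : is_haar Om mu.
Hypothesis htr : transitive_ss Om.
Hypothesis hsd : self_dual mu Om.
Hypothesis hu : unit_effect mu Om u.
Local Notation B := (ipG mu).
Implicit Types x y z w : 'rV[R]_n.

Let cOm : compact Om. Proof. by case: hss. Qed.
Let sOm : spans Om. Proof. by case: hss. Qed.
Let zna : zero_notin_aff Om. Proof. by case: hss. Qed.
Let addl := ipG_addl Om mu cOm sOm haar.
Let scalel := ipG_scalel Om mu cOm sOm haar.
Let sym := ipG_sym mu.
Let addr := B_addr Om mu cOm sOm haar.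
Let scaler := B_scaler Om mu cOm sOm haar.
Let subl := B_subl Om mu cOm sOm haar.
Let subr := B_subr Om mu cOm sOm haar.
Let oppr := B_oppr Om mu cOm sOm haar.

Lemma Om_vplus w : Om w -> Vplus Om w.
Proof. by move=> Ow; exists 1; split => //; exists w; rewrite scale1r. Qed.

Lemma vplus_pos y w : Vplus Om y -> Vplus Om w -> 0 <= B y w.
Proof.
move=> Py Pw.
have : [set y | forall x, Vplus Om x -> 0 <= ipG mu x y] w by rewrite -hsd.
by move/(_ y Py).
Qed.

Lemma effect_vplus e : effects mu Om e -> Vplus Om e.
Proof.
move=> he; rewrite hsd => x [l [l0 [w [Ow ->]]]].
by rewrite scalel mulr_ge0 // sym; case/andP: (he w Ow).
Qed.

Lemma nondeg d : (forall v, B d v = 0) -> d = 0.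
Proof.
move=> Hd.
have Pd : Vplus Om d by rewrite hsd => x _; rewrite sym Hd.
have Pn : Vplus Om (- d) by rewrite hsd => x _; rewrite oppr sym Hd oppr0.
case: Pd => l [l0 [w [Ow Ed]]].
case: Pn => l' [l0' [w' [Ow' En]]].
have [s0|s0] := eqVneq (l + l') 0.
  have le : l = 0 by lra.
  by rewrite Ed le scale0r.
exfalso; apply: zna.
exists 2%N, (fun i : 'I_2 => if val i == 0%N then l / (l + l') else l' / (l + l')).
exists (fun i : 'I_2 => if val i == 0%N then w else w').
split.
- by move=> i; case: ifP.
- rewrite !big_ord_recl big_ord0 /= addr0 -mulrDl divff //.
- rewrite !big_ord_recl big_ord0 /= addr0 !(mulrC _ (l + l')^-1) -!scalerA -Ed -En -scalerDr.
  by rewrite subrr scaler0.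
Qed.

Lemma semidef_zero d : B d d = 0 -> d = 0.
Proof. by move=> H; apply: nondeg; apply: (B_semi_orth Om mu cOm sOm haar). Qed.

Lemma B_expand x : B x x =
  \sum_(i < n) \sum_(j < n) (x 0 i * x 0 j) * B (delta_mx 0 i) (delta_mx 0 j).
Proof.
rewrite {1 2}(row_sum_delta x) (B_suml Om mu cOm sOm haar).
apply: eq_bigr => i _; rewrite scalel (B_sumr Om mu cOm sOm haar) mulr_sumr.
by apply: eq_bigr => j _; rewrite scaler mulrA.
Qed.

Lemma q_cont : continuous (fun x : 'rV[R]_n => B x x).
Proof.
have -> : (fun x : 'rV[R]_n => B x x) = (fun x =>
  \sum_(i < n) \sum_(j < n) (x 0 i * x 0 j) * B (delta_mx 0 i) (delta_mx 0 j)).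
  by apply: funext => x; exact: B_expand.
apply: cont_sum => i; apply: cont_sum => j x.
have h1 := (continuousM (@coord_continuous R 1 n 0 i x) (@coord_continuous R 1 n 0 j x)).
have h2 := continuousM h1 (@cst_continuous _ _ (B (delta_mx 0 i) (delta_mx 0 j)) x).
exact: h2.
Qed.

Lemma max_at_extreme om : extreme_point Om om -> forall w, Om w -> B w w <= B om om.
Proof.
move=> eom.
have Oom : Om om by case: eom.
have [m /set_mem Om_m Hm] := compact_EVT_max (ex_intro _ om Oom) cOm
  (continuous_subspaceT q_cont).
have em : extreme_point Om m.
  split => // y z t Oy Oz /andP[t0 t1] Em.
  have Q0 : 0 <= B (y - z) (y - z) by exact: ipG_ge0.
  have HQ : B (y - z) (y - z) = B y y - 2 * B y z + B z z.
    by rewrite !subl !subr (sym z y); ring.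
  have Hmm : B m m = t ^+ 2 * B y y + 2 * t * (1 - t) * B y z + (1 - t) ^+ 2 * B z z.
    by rewrite Em (B_comb2 Om mu cOm sOm haar).
  have Hy : B y y <= B m m by apply: Hm; apply: mem_set.
  have Hz : B z z <= B m m by apply: Hm; apply: mem_set.
  have Q00 : B (y - z) (y - z) = 0.
    apply/eqP; rewrite eq_le Q0 andbT.
    have tt : 0 < t * (1 - t) by rewrite mulr_gt0 // subr_gt0.
    nra.
  have yz : y = z by apply/eqP; rewrite -subr_eq0; apply/eqP; exact: semidef_zero.
  have my : m = y by rewrite Em -yz -scalerDl addrC subrK scale1r.
  by split; rewrite -?yz my.
have [T [GT ET]] := htr m om em eom.
move=> w Ow; rewrite ET (ipG_inv Om mu cOm sOm haar) //.
by apply: Hm; apply: mem_set.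
Qed.

Lemma cross_le om w : extreme_point Om om -> Om w -> B om w <= B om om.
Proof.
move=> eom Ow.
have H := @max_at_extreme om eom w Ow.
have Q0 : 0 <= B (om - w) (om - w) by exact: ipG_ge0.
rewrite !subl !subr (sym w om) in Q0.
lra.
Qed.

Lemma effect_decomp e : effects mu Om e -> e != 0 ->
  exists l w, [/\ 0 < l, Om w, e = l *: w & B u e = l].
Proof.
move=> he e0.
have [l [l0 [w [Ow Ee]]]] := @effect_vplus e he.
have lp : 0 < l.
  rewrite lt_def l0 andbT; apply/eqP => l00.
  by move: e0; rewrite Ee l00 scale0r eqxx.
exists l, w; split => //.
by rewrite Ee scaler hu // mulr1.
Qed.

Lemma Bu0 : B u 0 = 0.
Proof. exact: (B_0r Om mu cOm sOm haar). Qed.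

Lemma pure_indec e : pure_effect mu Om e -> indecomposable mu Om e ->
  B e e = B u e /\ exists om, [/\ Om om, e = B u e *: om & B e om = 1].
Proof.
move=> pe [e0 Hind].
have he : effects mu Om e by case: pe.
have [l [w [lp Ow Ee Bl]]] := @effect_decomp e he e0.
have same : forall a c y, Om y -> a != 0 -> a *: y = c *: e -> y = w.
  move=> a c y Oy a0 E.
  have E' : a *: y = (c * l) *: w by rewrite E Ee scalerA.
  have ac : a = c * l.
    have := congr1 (B u) E'; rewrite !scaler hu // hu //.
    by rewrite !mulr1.
  by apply: (scalerI a0); rewrite E' ac.
have ew : extreme_point Om w.
  split => // y z t Oy Oz /andP[t0 t1] Ew.
  set e1 := (l * t) *: y; set e2 := (l * (1 - t)) *: z.
  have Ee12 : e = e1 + e2 by rewrite Ee Ew scalerDr !scalerA.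
  have pos1 : forall v, Om v -> 0 <= B e1 v.
    move=> v Ov; rewrite scalel; apply: mulr_ge0.
      by apply: mulr_ge0; exact: ltW.
    by apply: vplus_pos; apply: Om_vplus.
  have pos2 : forall v, Om v -> 0 <= B e2 v.
    move=> v Ov; rewrite scalel; apply: mulr_ge0.
      by apply: mulr_ge0; [exact: ltW | rewrite subr_ge0; exact: ltW].
    by apply: vplus_pos; apply: Om_vplus.
  have sum12 : forall v, Om v -> B e1 v + B e2 v <= 1.
    by move=> v Ov; rewrite -addl -Ee12; case/andP: (he v Ov).
  have ef1 : effects mu Om e1.
    move=> v Ov; rewrite pos1 //=; have := sum12 v Ov; have := pos2 v Ov; lra.
  have ef2 : effects mu Om e2.
    move=> v Ov; rewrite pos2 //=; have := sum12 v Ov; have := pos1 v Ov; lra.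
  have [[c1 E1] [c2 E2]] := Hind e1 e2 ef1 ef2 Ee12.
  have yw : y = w.
    apply: (same (l * t) c1) => //; by rewrite mulf_neq0 // gt_eqF.
  have zw : z = w.
    apply: (same (l * (1 - t)) c2) => //.
    by rewrite mulf_neq0 // gt_eqF // subr_gt0.
  by rewrite yw zw.
have Bww : 0 < B w w.
  rewrite lt_def ipG_ge0 andbT; apply/eqP => w0.
  have := hu w Ow; rewrite (@semidef_zero w w0) Bu0 => /eqP.
  by rewrite eq_sym oner_eq0.
have BeW : B e w = l * B w w by rewrite Ee scalel.
have Mp : 0 < B e w by rewrite BeW mulr_gt0.
have M1 : B e w = 1.
  have Mle : B e w <= 1 by case/andP: (he w Ow).
  apply/eqP; rewrite eq_le Mle /=; rewrite leNgt; apply/negP => Mlt.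
  set M := B e w in Mp Mle Mlt BeW.
  have yeff : effects mu Om (M^-1 *: e).
    move=> v Ov; rewrite scalel Ee scalel.
    have h0 : 0 <= B w v by apply: vplus_pos; apply: Om_vplus.
    have h1 : B w v <= B w w by apply: cross_le.
    have Mi : 0 < M^-1 by rewrite invr_gt0.
    apply/andP; split; first by rewrite !mulr_ge0 // ltW.
    rewrite ler_pdivrMl //= mulr1 BeW ler_wpM2l //; exact: ltW.
  have zeff : effects mu Om 0.
    by move=> v Ov; rewrite (B_0l Om mu cOm sOm haar) lexx ler01.
  have Eq : e = M *: (M^-1 *: e) + (1 - M) *: 0.
    by rewrite scaler0 addr0 scalerA mulfV ?scale1r // gt_eqF.
  have [ye _] := pe.2 _ _ M yeff zeff (ltac:(by rewrite Mp Mlt)) Eq.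
  have : (M^-1 - 1) *: e = 0 by rewrite scalerBl ye scale1r subrr.
  move/eqP; rewrite scaler_eq0 (negbTE e0) orbF subr_eq0 invr_eq1 => /eqP M1.
  by move: Mlt; rewrite M1 ltxx.
split.
  by rewrite Bl {2}Ee scaler M1 mulr1.
by exists w; split => //; rewrite Bl.
Qed.

Lemma part2 (A : finType) (f : A -> 'rV[R]_n) : ideal_observable mu Om u f ->
  forall a, f a != 0 -> B (f a) ((B u (f a))^-1 *: f a) = 1.
Proof.
move=> [[hf _ _] hid] a fa0.
have [k [es [Hes Hfa]]] := hid a.
set S := \sum_(i < k) es i.
have Sle : forall v, Om v -> B S v <= 1.
  move=> v Ov; case: Hfa => Ef.
    by have := hf a v Ov; rewrite Ef => /andP[].
  have := hf a v Ov; rewrite Ef subl (hu v Ov) => /andP[H _].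
  by move: H; rewrite subr_ge0.
have cross : forall i j, i != j -> B (es j) (es i) = 0.
  move=> i j ij.
  have [pi ii] := Hes i.
  have [_ [om [Oom Eom Bom]]] := @pure_indec (es i) pi ii.
  have pos : forall j', 0 <= B (es j') om.
    move=> j'; apply: vplus_pos; last exact: Om_vplus.
    by apply: effect_vplus; case: (Hes j') => -[].
  have := Sle om Oom.
  rewrite /S (B_suml Om mu cOm sOm haar) (bigD1 i) //= Bom.
  rewrite -lerBrDl subrr => Hr.
  have Hz : \sum_(j' < k | j' != i) B (es j') om = 0.
    by apply/eqP; rewrite eq_le Hr sumr_ge0.
  have := (psumr_eq0P (fun j' _ => pos j') Hz) j.
  rewrite eq_sym ij => /(_ isT) Hj.
  by rewrite Eom scaler Hj mulr0.
have SS : B S S = B u S.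
  rewrite /S (B_suml Om mu cOm sOm haar) (B_sumr Om mu cOm sOm haar).
  apply: eq_bigr => i _.
  rewrite (B_sumr Om mu cOm sOm haar) (bigD1 i) //= big1 ?addr0.
    by have [pi ii] := Hes i; have [-> _] := @pure_indec (es i) pi ii.
  by move=> j ji; rewrite sym cross // eq_sym.
have ff : B (f a) (f a) = B u (f a).
  case: Hfa => ->; first exact: SS.
  rewrite !subl !subr SS (sym S u); ring.
have [l [w [lp Ow Ee Bl]]] := @effect_decomp (f a) (hf a) fa0.
by rewrite scaler ff mulVf // Bl gt_eqF.
Qed.

End Main.


Theorem lemma3p2 (R : realType) (N : nat) (Om : set 'rV[R]_N.+1)
  (mu : probability (MatB R N.+1) R) (u : 'rV[R]_N.+1) :
  state_space Om -> is_haar Om mu -> transitive_ss Om ->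
  invariant_state_normalized Om -> self_dual mu Om -> unit_effect mu Om u ->
  (forall e, effects mu Om e -> e != 0 -> Om ((ipG mu u e)^-1 *: e)) /\
  (forall (A : finType) (f : A -> 'rV[R]_N.+1), ideal_observable mu Om u f ->
     forall a, f a != 0 ->
       ipG mu (f a) ((ipG mu u (f a))^-1 *: f a) = 1).
Proof.
move=> hss haar htr _ hsd hu; split.
  move=> e he e0.
  have [l [w [lp Ow Ee Bl]]] := effect_decomp Om mu u hss haar hsd hu e he e0.
  by rewrite Bl Ee scalerA mulVf ?scale1r // gt_eqF.
exact: (part2 Om mu u hss haar htr hsd hu).
Qed.
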